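(* Let $\alpha$ be a unit speed Frenet curve in $\mathbb{E}^3$ and $\beta$ an osculating mate of $\alpha$ with unit tangent $\bar T$. The following are equivalent: (i) the tangent indicatrix $\bar T$ of $\beta$ is a general helix; (ii) $\beta$ is a slant helix; (iii) $\alpha$ is a general helix.
   Context: $\alpha:I\to\mathbb{E}^3$ is parametrized by arclength $s$, with Frenet frame $\{T,N,B\}$, curvature $\kappa>0$, torsion $\tau$. An osculating mate of $\alpha$ is a curve $\beta(s)=\int(x_1T+x_2N)ds$ with smooth $x_1,x_2$, $x_1^2+x_2^2=1$ and $\beta''\perp\mathrm{span}\{T,N\}$; $\beta$ is assumed to be a Frenet curve, unit speed in $s$, with Frenet frame $\{\bar T,\bar N,\bar B\}$. The tangent indicatrix of $\beta$ is the spherical curve $s\mapsto\bar T(s)$. A general helix is a curve whose tangent makes a constant angle with a fixed direction (equivalently, the ratio torsion/curvature is constant). A slant helix is a curve whose principal normal makes a constant angle with a fixed direction (equivalently $\frac{k^2}{(k^2+t^2)^{3/2}}(t/k)'$ is constant, $k,t$ its curvature and torsion). *)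

(* Defs.v *)
From Stdlib Require Import Reals.
From Coquelicot Require Import Coquelicot.
Open Scope R_scope.

Definition V3 : Type := (R * R * R)%type.
Definition vx (v : V3) : R := fst (fst v).
Definition vy (v : V3) : R := snd (fst v).
Definition vz (v : V3) : R := snd v.
Definition mkV (x y z : R) : V3 := (x, y, z).

Definition vadd (u v : V3) : V3 := mkV (vx u + vx v) (vy u + vy v) (vz u + vz v).
Definition vscal (k : R) (v : V3) : V3 := mkV (k * vx v) (k * vy v) (k * vz v).
Definition dot (u v : V3) : R := vx u * vx v + vy u * vy v + vz u * vz v.
Definition vnorm (v : V3) : R := sqrt (dot v v).
Definition cross (u v : V3) : V3 :=
  mkV (vy u * vz v - vz u * vy v) (vz u * vx v - vx u * vz v) (vx u * vy v - vy u * vx v).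
Definition vzero : V3 := mkV 0 0 0.

Definition oint (a b : Rbar) (s : R) : Prop := Rbar_lt a s /\ Rbar_lt s b.

Definition smooth_on (I : R -> Prop) (f : R -> R) : Prop :=
  forall (n : nat) (s : R), I s -> ex_derive_n f n s.

Definition smooth_curve_on (I : R -> Prop) (c : R -> V3) : Prop :=
  smooth_on I (fun s => vx (c s)) /\ smooth_on I (fun s => vy (c s)) /\
  smooth_on I (fun s => vz (c s)).

Definition dcurve (c : R -> V3) (s : R) : V3 :=
  mkV (Derive (fun t => vx (c t)) s) (Derive (fun t => vy (c t)) s)
      (Derive (fun t => vz (c t)) s).

(** Frenet apparatus of a unit speed curve c. *)
Definition Tan (c : R -> V3) : R -> V3 := dcurve c.
Definition curv (c : R -> V3) (s : R) : R := vnorm (dcurve (Tan c) s).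
Definition Nor (c : R -> V3) (s : R) : V3 := vscal (/ curv c s) (dcurve (Tan c) s).
Definition Binor (c : R -> V3) (s : R) : V3 := cross (Tan c s) (Nor c s).
Definition tors (c : R -> V3) (s : R) : R := - dot (dcurve (Binor c) s) (Nor c s).

Definition frenet_curve (I : R -> Prop) (c : R -> V3) : Prop :=
  smooth_curve_on I c /\
  (forall s, I s -> vnorm (dcurve c s) = 1) /\
  (forall s, I s -> curv c s > 0).

Definition osculating_mate (I : R -> Prop) (alpha beta : R -> V3) : Prop :=
  exists x1 x2 : R -> R,
    smooth_on I x1 /\ smooth_on I x2 /\
    (forall s, I s -> x1 s ^ 2 + x2 s ^ 2 = 1) /\
    (forall s, I s ->
        dcurve beta s = vadd (vscal (x1 s) (Tan alpha s)) (vscal (x2 s) (Nor alpha s))) /\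
    (forall s, I s -> dot (dcurve (dcurve beta) s) (Tan alpha s) = 0) /\
    (forall s, I s -> dot (dcurve (dcurve beta) s) (Nor alpha s) = 0) /\
    frenet_curve I beta.

(** General helix (for a regular curve, not necessarily unit speed): its unit
    tangent makes a constant angle with a fixed (unit) direction. *)
Definition general_helix (I : R -> Prop) (g : R -> V3) : Prop :=
  (forall s, I s -> dcurve g s <> vzero) /\
  exists (u : V3) (c : R), vnorm u = 1 /\
    forall s, I s -> dot (vscal (/ vnorm (dcurve g s)) (dcurve g s)) u = c.

Definition slant_helix (I : R -> Prop) (g : R -> V3) : Prop :=
  exists (u : V3) (c : R), vnorm u = 1 /\
    forall s, I s -> dot (Nor g s) u = c.

(* Main.v *)
Require Import Defs.
From Stdlib Require Import Reals Lra Psatz Classical.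
From Coquelicot Require Import Coquelicot.
Open Scope R_scope.

Lemma d_mult (f g : R -> R) x df dg : is_derive f x df -> is_derive g x dg ->
  is_derive (fun t => f t * g t) x (df * g x + f x * dg).
Proof. intros Hf Hg. exact (is_derive_mult f g x df dg Hf Hg Rmult_comm). Qed.

Lemma d_plus (f g : R -> R) x df dg : is_derive f x df -> is_derive g x dg ->
  is_derive (fun t => f t + g t) x (df + dg).
Proof. intros Hf Hg. exact (is_derive_plus f g x df dg Hf Hg). Qed.

Lemma d_const (k : R) x : is_derive (fun _ => k) x 0.
Proof. exact (@is_derive_const R_AbsRing R_NormedModule k x). Qed.

Lemma d_eqv (f : R -> R) x l l' : is_derive f x l -> l = l' -> is_derive f x l'.
Proof. intros H ->. exact H. Qed.

Definition isd (c : R -> V3) (s : R) (d : V3) : Prop :=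
  is_derive (fun t => vx (c t)) s (vx d) /\ is_derive (fun t => vy (c t)) s (vy d) /\
  is_derive (fun t => vz (c t)) s (vz d).

Lemma v3eq (u : V3) : u = mkV (vx u) (vy u) (vz u).
Proof. destruct u as [[x y] z]. reflexivity. Qed.

Lemma isd_dcurve c s d : isd c s d -> dcurve c s = d.
Proof.
  intros [H1 [H2 H3]]. rewrite (v3eq d). unfold dcurve.
  apply is_derive_unique in H1, H2, H3. simpl in *. rewrite H1, H2, H3.
  reflexivity.
Qed.

Lemma isd_of_ex c s : ex_derive (fun t => vx (c t)) s -> ex_derive (fun t => vy (c t)) s ->
  ex_derive (fun t => vz (c t)) s -> isd c s (dcurve c s).
Proof.
  intros H1 H2 H3. unfold isd, dcurve, mkV, vx, vy, vz; simpl.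
  split; [|split]; apply Derive_correct; assumption.
Qed.

Lemma d_dot c e s dc de : isd c s dc -> isd e s de ->
  is_derive (fun t => dot (c t) (e t)) s (dot dc (e s) + dot (c s) de).
Proof.
  intros [H1 [H2 H3]] [K1 [K2 K3]]. unfold dot.
  assert (X := d_plus _ _ _ _ _ (d_plus _ _ _ _ _ (d_mult _ _ _ _ _ H1 K1) (d_mult _ _ _ _ _ H2 K2))
    (d_mult _ _ _ _ _ H3 K3)).
  eapply d_eqv. eapply is_derive_ext; [| exact X]. intro t; simpl. reflexivity. simpl. ring.
Qed.

Lemma isd_const (u : V3) s : isd (fun _ => u) s vzero.
Proof. unfold isd, vzero, mkV, vx, vy, vz; simpl; split; [|split]; apply d_const. Qed.

Lemma d_dotc c s dc u : isd c s dc -> is_derive (fun t => dot (c t) u) s (dot dc u).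
Proof.
  intros H. eapply d_eqv. apply (d_dot c (fun _ => u) s dc vzero H (isd_const u s)).
  unfold dot, vzero, mkV, vx, vy, vz; simpl; ring.
Qed.

Lemma loc_zero a b s (f : R -> R) k df : oint a b s -> (forall t, oint a b t -> f t = k) ->
  is_derive f s df -> df = 0.
Proof.
  intros [Ha Hb] Hf Hd.
  assert (L : locally s (fun t => f t = k)).
  { apply (locally_interval _ s a b Ha Hb). intros y Hy1 Hy2. apply Hf. split; assumption. }
  assert (Hd' := is_derive_ext_loc f (fun _ => k) s df L Hd).
  apply is_derive_unique in Hd'. rewrite <- Hd'.
  apply is_derive_unique. apply d_const.
Qed.

Lemma oint_convex a b x y z : oint a b x -> oint a b y -> Rmin x y <= z <= Rmax x y -> oint a b z.
Proof.
  unfold oint, Rmin, Rmax. destruct (Rle_dec x y);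
  destruct a as [ra| |]; destruct b as [rb| |]; simpl; intros; lra.
Qed.

Lemma const_of_d0 a b (f : R -> R) : (forall s, oint a b s -> is_derive f s 0) ->
  exists c, forall s, oint a b s -> f s = c.
Proof.
  intros H. destruct (classic (exists s0, oint a b s0)) as [[s0 Hs0] | Hn].
  - exists (f s0). intros s Hs.
    destruct (MVT_gen f s0 s (fun _ => 0)) as [c [_ Hc]].
    + intros x Hx. apply H. apply (oint_convex a b s0 s x Hs0 Hs). lra.
    + intros x Hx. apply continuity_pt_filterlim. apply (ex_derive_continuous (V:=R_NormedModule)).
      exists 0. apply H. apply (oint_convex a b s0 s x Hs0 Hs). lra.
    + lra.
  - exists 0. intros s Hs. exfalso. apply Hn. exists s. exact Hs.
Qed.

Lemma dot_scal_l k x y : dot (vscal k x) y = k * dot x y.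
Proof. unfold dot, vscal, mkV, vx, vy, vz; simpl; ring. Qed.
Lemma dot_scal_r k x y : dot x (vscal k y) = k * dot x y.
Proof. unfold dot, vscal, mkV, vx, vy, vz; simpl; ring. Qed.
Lemma dot_add_l x y z : dot (vadd x y) z = dot x z + dot y z.
Proof. unfold dot, vadd, mkV, vx, vy, vz; simpl; ring. Qed.
Lemma dot_add_r x y z : dot x (vadd y z) = dot x y + dot x z.
Proof. unfold dot, vadd, mkV, vx, vy, vz; simpl; ring. Qed.
Lemma dot_comm x y : dot x y = dot y x.
Proof. unfold dot; ring. Qed.
Lemma dot_nonneg x : 0 <= dot x x.
Proof. unfold dot; nra. Qed.
Lemma cross_norm T n : dot (cross T n) (cross T n) = dot T T * dot n n - (dot T n)^2.
Proof. destruct T as [[a b] c]; destruct n as [[d e] f]; unfold dot, cross, mkV, vx, vy, vz; simpl; ring. Qed.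

Lemma par (T n v : V3) : dot T T = 1 -> dot n n = 1 -> dot T n = 0 -> dot v T = 0 -> dot v n = 0 ->
  v = vscal (dot v (cross T n)) (cross T n).
Proof.
  intros h1 h2 h3 h4 h5.
  assert (hm : dot (cross T n) (cross T n) = 1) by (rewrite cross_norm, h1, h2, h3; ring).
  revert hm h4 h5.
  destruct T as [[a b] c]; destruct n as [[d e] f]; destruct v as [[x y] z];
  unfold dot, cross, vscal, mkV, vx, vy, vz; simpl. intros hm h4 h5.
  set (m1 := b * f - c * e) in *. set (m2 := c * d - a * f) in *. set (m3 := a * e - b * d) in *.
  set (k := x * m1 + y * m2 + z * m3).
  set (p := x * d + y * e + z * f) in *. set (q := x * a + y * b + z * c) in *.
  assert (E1 : x * (m1*m1+m2*m2+m3*m3) - k * m1 = p * (m2 * c - m3 * b) - q * (m2 * f - m3 * e))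
    . { unfold k, p, q, m1, m2, m3. ring. }
  assert (E2 : y * (m1*m1+m2*m2+m3*m3) - k * m2 = p * (m3 * a - m1 * c) - q * (m3 * d - m1 * f))
    . { unfold k, p, q, m1, m2, m3. ring. }
  assert (E3 : z * (m1*m1+m2*m2+m3*m3) - k * m3 = p * (m1 * b - m2 * a) - q * (m1 * e - m2 * d))
    . { unfold k, p, q, m1, m2, m3. ring. }
  rewrite hm, h4, h5 in *.
  f_equal; [f_equal|]; lra.
Qed.

Lemma ortho (T N n v u : V3) : dot T T = 1 -> dot n n = 1 -> dot T n = 0 ->
  dot N N = 1 -> dot N T = 0 -> dot N n = 0 -> dot v T = 0 -> dot v n = 0 ->
  dot v u = dot v N * dot N u.
Proof.
  intros h1 h2 h3 h4 h5 h6 h7 h8.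
  assert (hm : dot (cross T n) (cross T n) = 1) by (rewrite cross_norm, h1, h2, h3; ring).
  pose proof (par T n v h1 h2 h3 h7 h8) as Ev.
  pose proof (par T n N h1 h2 h3 h5 h6) as EN.
  set (m := cross T n) in *.
  rewrite EN in h4. rewrite dot_scal_l, dot_scal_r, hm in h4.
  rewrite Ev, EN. rewrite !dot_scal_l, !dot_scal_r, hm.
  set (j := dot N m) in *. set (k := dot v m). set (w := dot m u).
  replace (k * (j * 1) * (j * w)) with (k * w * (j * (j * 1))) by ring. rewrite h4. ring.
Qed.

Lemma sm_d1 I c s : smooth_curve_on I c -> I s -> isd c s (dcurve c s).
Proof.
  intros [Sx [Sy Sz]] Hs. apply isd_of_ex.
  exact (Sx 1%nat s Hs). exact (Sy 1%nat s Hs). exact (Sz 1%nat s Hs).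
Qed.

Lemma sm_d2 I c s : smooth_curve_on I c -> I s -> isd (dcurve c) s (dcurve (dcurve c) s).
Proof.
  intros [Sx [Sy Sz]] Hs. apply isd_of_ex.
  exact (Sx 2%nat s Hs). exact (Sy 2%nat s Hs). exact (Sz 2%nat s Hs).
Qed.

Lemma sm_d3 I c s : smooth_curve_on I c -> I s ->
  isd (dcurve (dcurve c)) s (dcurve (dcurve (dcurve c)) s).
Proof.
  intros [Sx [Sy Sz]] Hs. apply isd_of_ex.
  exact (Sx 3%nat s Hs). exact (Sy 3%nat s Hs). exact (Sz 3%nat s Hs).
Qed.

Lemma ex_scal_comp (w : R -> V3) s (g : V3 -> R) :
  isd w s (dcurve w s) -> dot (w s) (w s) > 0 ->
  ex_derive (fun t => g (w t)) s ->
  ex_derive (fun t => / vnorm (w t) * g (w t)) s.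
Proof.
  intros Hw Hp Hg. apply ex_derive_mult; [|exact Hg].
  apply ex_derive_inv.
  - eexists. unfold vnorm. apply is_derive_sqrt; [|exact Hp].
    apply (d_dot w w s _ _ Hw Hw).
  - unfold vnorm. apply Rgt_not_eq. apply sqrt_lt_R0. exact Hp.
Qed.

Lemma sqrt_pos_dot v : sqrt (dot v v) > 0 -> dot v v > 0.
Proof.
  intros H. destruct (dot_nonneg v) as [H'|H']; [lra|].
  rewrite <- H', sqrt_0 in H. lra.
Qed.

Lemma isd_Nor I c s : smooth_curve_on I c -> I s -> curv c s > 0 ->
  isd (Nor c) s (dcurve (Nor c) s).
Proof.
  intros Sc Hs Hk.
  assert (Hw := sm_d3 I c s Sc Hs).
  assert (Hp : dot (dcurve (dcurve c) s) (dcurve (dcurve c) s) > 0) by (apply sqrt_pos_dot; exact Hk).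
  pose proof Hw as [W1 [W2 W3]].
  apply isd_of_ex.
  - apply (ex_scal_comp (dcurve (dcurve c)) s vx Hw Hp). eexists; exact W1.
  - apply (ex_scal_comp (dcurve (dcurve c)) s vy Hw Hp). eexists; exact W2.
  - apply (ex_scal_comp (dcurve (dcurve c)) s vz Hw Hp). eexists; exact W3.
Qed.

Lemma norm1 v : vnorm v = 1 -> dot v v = 1.
Proof.
  unfold vnorm. intro h. rewrite <- (sqrt_sqrt (dot v v)) by apply dot_nonneg. rewrite h. ring.
Qed.

Lemma sq_norm v : dot v v = vnorm v * vnorm v.
Proof. unfold vnorm. rewrite sqrt_sqrt by apply dot_nonneg. reflexivity. Qed.

Lemma scal_inv k v : k > 0 -> v = vscal k (vscal (/ k) v).
Proof.
  intros h. destruct v as [[x y] z]. unfold vscal, mkV, vx, vy, vz; simpl.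
  f_equal; [f_equal|]; field; lra.
Qed.

Lemma pw a b alpha beta s :
  frenet_curve (oint a b) alpha -> osculating_mate (oint a b) alpha beta -> oint a b s ->
  dot (Tan alpha s) (Tan alpha s) = 1 /\
  dcurve (Tan alpha) s = vscal (curv alpha s) (Nor alpha s) /\
  dot (Nor alpha s) (Nor alpha s) = 1 /\
  dot (Nor alpha s) (Tan alpha s) = 0 /\
  dot (Nor beta s) (Nor beta s) = 1 /\
  dot (Nor beta s) (Tan alpha s) = 0 /\
  dot (Nor beta s) (Nor alpha s) = 0 /\
  dot (Nor beta s) (dcurve (Tan beta) s) = curv beta s /\
  dot (Nor beta s) (Tan beta s) = 0.
Proof.
  intros [SA [UA KA]] [x1 [x2 [_ [_ [Hx [Hb' [HwT [HwN [SB [UB KB]]]]]]]]]] Hs.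
  assert (F1all : forall t, oint a b t -> dot (Tan alpha t) (Tan alpha t) = 1).
  { intros t Ht. apply norm1. apply UA; exact Ht. }
  assert (HT := sm_d2 _ alpha s SA Hs).
  assert (F2 : dot (dcurve (Tan alpha) s) (Tan alpha s) = 0).
  { assert (Z := loc_zero a b s _ 1 _ Hs F1all (d_dot _ _ _ _ _ HT HT)).
    rewrite (dot_comm (Tan alpha s)) in Z. unfold Tan in *. lra. }
  assert (Hk := KA s Hs).
  assert (F3 : dcurve (Tan alpha) s = vscal (curv alpha s) (Nor alpha s)).
  { unfold Nor. apply scal_inv. exact Hk. }
  assert (Ek : dot (dcurve (Tan alpha) s) (dcurve (Tan alpha) s) = curv alpha s * curv alpha s).
  { apply sq_norm. }
  assert (F4 : dot (Nor alpha s) (Nor alpha s) = 1).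
  { unfold Nor. rewrite dot_scal_l, dot_scal_r, Ek. field. lra. }
  assert (F5 : dot (Nor alpha s) (Tan alpha s) = 0).
  { unfold Nor. rewrite dot_scal_l, F2. ring. }
  assert (Hkb := KB s Hs).
  assert (Ekb : dot (dcurve (Tan beta) s) (dcurve (Tan beta) s) = curv beta s * curv beta s).
  { apply sq_norm. }
  assert (G1 : dot (dcurve (Tan beta) s) (Tan alpha s) = 0) by exact (HwT s Hs).
  assert (G2 : dot (dcurve (Tan beta) s) (Nor alpha s) = 0) by exact (HwN s Hs).
  assert (F7 : dot (Nor beta s) (Nor beta s) = 1).
  { unfold Nor at 1 2. rewrite dot_scal_l, dot_scal_r, Ekb. field. lra. }
  assert (F8 : dot (Nor beta s) (Tan alpha s) = 0).
  { unfold Nor at 1. rewrite dot_scal_l, G1. ring. }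
  assert (F9 : dot (Nor beta s) (Nor alpha s) = 0).
  { unfold Nor at 1. rewrite dot_scal_l, G2. ring. }
  assert (F10 : dot (Nor beta s) (dcurve (Tan beta) s) = curv beta s).
  { unfold Nor at 1. rewrite dot_scal_l, Ekb. field. lra. }
  assert (F11 : dot (Nor beta s) (Tan beta s) = 0).
  { unfold Tan at 1. rewrite (Hb' s Hs), dot_add_r, !dot_scal_r, F8, F9. ring. }
  pose proof (F1all s Hs). repeat split; assumption.
Qed.

Lemma key a b alpha beta s :
  frenet_curve (oint a b) alpha -> osculating_mate (oint a b) alpha beta -> oint a b s ->
  dot (dcurve (Nor beta) s) (Nor alpha s) <> 0 /\
  (forall u, dot (dcurve (Nor beta) s) u = dot (dcurve (Nor beta) s) (Nor alpha s) * dot (Nor alpha s) u).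
Proof.
  intros HA HM Hs.
  assert (P := fun t Ht => pw a b alpha beta t HA HM Ht).
  destruct (P s Hs) as [F1 [F3 [F4 [F5 [F7 [F8 [F9 [F10 F11]]]]]]]].
  destruct HA as [SA [UA KA]].
  destruct HM as [x1 [x2 [_ [_ [Hx [Hb' [HwT [HwN [SB [UB KB]]]]]]]]]].
  assert (HT := sm_d2 _ alpha s SA Hs).
  assert (Htb := sm_d2 _ beta s SB Hs).
  assert (Hn := isd_Nor _ beta s SB Hs (KB s Hs)).
  set (n' := dcurve (Nor beta) s) in *.
  assert (D1 : dot n' (Tan alpha s) = 0).
  { assert (Z := loc_zero a b s (fun t => dot (Nor beta t) (Tan alpha t)) 0 _ Hs
       (fun t Ht => proj1 (proj2 (proj2 (proj2 (proj2 (proj2 (P t Ht))))))) (d_dot _ _ _ _ _ Hn HT)).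
    change (dcurve (dcurve alpha) s) with (dcurve (Tan alpha) s) in Z.
    rewrite F3, dot_scal_r, F9 in Z.
    unfold Tan in *. lra. }
  assert (D2 : dot n' (Nor beta s) = 0).
  { assert (Z := loc_zero a b s (fun t => dot (Nor beta t) (Nor beta t)) 1 _ Hs
       (fun t Ht => proj1 (proj2 (proj2 (proj2 (proj2 (P t Ht)))))) (d_dot _ _ _ _ _ Hn Hn)).
    rewrite (dot_comm (Nor beta s)) in Z. lra. }
  assert (O : forall u, dot n' u = dot n' (Nor alpha s) * dot (Nor alpha s) u).
  { intro u. apply (ortho (Tan alpha s) (Nor alpha s) (Nor beta s)); try assumption.
    all: rewrite dot_comm; assumption. }
  split; [|exact O].
  assert (Z := loc_zero a b s (fun t => dot (Nor beta t) (Tan beta t)) 0 _ Hs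
       (fun t Ht => proj2 (proj2 (proj2 (proj2 (proj2 (proj2 (proj2 (proj2 (P t Ht))))))))) (d_dot _ _ _ _ _ Hn Htb)).
  change (dcurve (dcurve beta) s) with (dcurve (Tan beta) s) in Z.
  change (dcurve beta s) with (Tan beta s) in Z.
  rewrite F10, O in Z. assert (Hkb := KB s Hs).
  intro E. rewrite E in Z. lra.
Qed.

Lemma vnorm_zero : vnorm vzero = 0.
Proof. unfold vnorm, dot, vzero, mkV, vx, vy, vz; simpl. replace (0*0+0*0+0*0) with 0 by ring. apply sqrt_0. Qed.

Theorem theorem14 (a b : Rbar) (alpha beta : R -> V3) :
  frenet_curve (oint a b) alpha ->
  osculating_mate (oint a b) alpha beta ->
  (general_helix (oint a b) (Tan beta) <-> slant_helix (oint a b) beta) /\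
  (slant_helix (oint a b) beta <-> general_helix (oint a b) alpha).
Proof.
  intros HA HM.
  assert (K := fun s Hs => key a b alpha beta s HA HM Hs).
  pose proof HA as [SA [UA KA]].
  pose proof HM as [x1 [x2 [_ [_ [Hx [Hb' [HwT [HwN [SB [UB KB]]]]]]]]]].
  assert (Tn : forall s u, oint a b s ->
     dot (vscal (/ vnorm (dcurve alpha s)) (dcurve alpha s)) u = dot (Tan alpha s) u).
  { intros s u Hs. rewrite (UA s Hs), Rinv_1, dot_scal_l. unfold Tan. ring. }
  assert (dT : forall s u, oint a b s ->
     is_derive (fun t => dot (Tan alpha t) u) s (curv alpha s * dot (Nor alpha s) u)).
  { intros s u Hs. eapply d_eqv. apply d_dotc. apply (sm_d2 _ alpha s SA Hs).
    change (dcurve (dcurve alpha) s) with (dcurve (Tan alpha) s).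
    destruct (pw a b alpha beta s HA HM Hs) as [_ [F3 _]]. rewrite F3, dot_scal_l. reflexivity. }
  assert (dn : forall s u, oint a b s ->
     is_derive (fun t => dot (Nor beta t) u) s (dot (dcurve (Nor beta) s) u)).
  { intros s u Hs. apply d_dotc. apply (isd_Nor _ beta s SB Hs (KB s Hs)). }
  split; split.
  - intros [_ [u [c [Hu H]]]]. exists u, c. split; [exact Hu|]. intros s Hs. exact (H s Hs).
  - intros [u [c [Hu H]]]. split.
    + intros s Hs E. assert (h := KB s Hs). unfold curv in h. rewrite E, vnorm_zero in h. lra.
    + exists u, c. split; [exact Hu|]. intros s Hs. exact (H s Hs).
  - intros [u [c [Hu H]]]. split.
    { intros s Hs E. assert (h := UA s Hs). rewrite E, vnorm_zero in h. lra. }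
    assert (Nu : forall s, oint a b s -> dot (Nor alpha s) u = 0).
    { intros s Hs. destruct (K s Hs) as [Hne O].
      assert (Z := loc_zero a b s _ c _ Hs H (dn s u Hs)). rewrite O in Z.
      destruct (Rmult_integral _ _ Z) as [Z'|Z']; [contradiction|exact Z']. }
    destruct (const_of_d0 a b (fun t => dot (Tan alpha t) u)) as [c' Hc'].
    { intros s Hs. apply (d_eqv _ _ _ _ (dT s u Hs)). rewrite (Nu s Hs). apply Rmult_0_r. }
    exists u, c'. split; [exact Hu|]. intros s Hs. rewrite Tn by exact Hs. apply Hc'; exact Hs.
  - intros [_ [u [c [Hu H]]]].
    assert (H' : forall s, oint a b s -> dot (Tan alpha s) u = c).
    { intros s Hs. rewrite <- Tn by exact Hs. apply H; exact Hs. }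
    assert (Nu : forall s, oint a b s -> dot (Nor alpha s) u = 0).
    { intros s Hs. assert (Z := loc_zero a b s _ c _ Hs H' (dT s u Hs)).
      assert (h := KA s Hs).
      destruct (Rmult_integral _ _ Z) as [Z'|Z']; [lra|exact Z']. }
    destruct (const_of_d0 a b (fun t => dot (Nor beta t) u)) as [c' Hc'].
    { intros s Hs. apply (d_eqv _ _ _ _ (dn s u Hs)). destruct (K s Hs) as [_ O].
      rewrite O, (Nu s Hs). apply Rmult_0_r. }
    exists u, c'. split; [exact Hu|]. exact Hc'.
Qed.
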